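(* Let $X$ be a convex subset of a real vector space, $(Y,\langle\cdot,\cdot\rangle)$ a real inner product space, $I:X\to\mathbb{R}$ a bounded above convex function and $\Phi:X\to Y$ an affine operator such that $$\inf_{z\in\Phi(X)}\langle z,y\rangle=-\infty$$ for all $y\in\Phi(X)\setminus\{0\}$. Then the set of all global minima of the function $x\mapsto I(x)+\|\Phi(x)\|^2$ on $X$ is contained in $\Phi^{-1}(0)$.
   Context: If $E,F$ are real vector spaces and $D$ is a convex subset of $E$, an operator $\Phi:D\to F$ is called affine if $\Phi(\lambda x+(1-\lambda)y)=\lambda\Phi(x)+(1-\lambda)\Phi(y)$ for all $x,y\in D$ and $\lambda\in[0,1]$. *)

(* Defs.v *)
From mathcomp Require Import all_boot all_order all_algebra.
From mathcomp Require Import all_classical all_reals.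
From mathcomp Require Import ereal.
Set Implicit Arguments. Unset Strict Implicit. Unset Printing Implicit Defensive.
Import Order.TTheory GRing.Theory Num.Theory.
Local Open Scope classical_set_scope.
Local Open Scope ring_scope.

Section Defs.
Variables (R : realType).

Definition convex_set (E : lmodType R) (D : set E) : Prop :=
  forall x y (l : R), D x -> D y -> 0 <= l <= 1 -> D (l *: x + (1 - l) *: y).

Definition convex_fun_on (E : lmodType R) (D : set E) (f : E -> R) : Prop :=
  forall x y (l : R), D x -> D y -> 0 <= l <= 1 ->
    f (l *: x + (1 - l) *: y) <= l * f x + (1 - l) * f y.

Definition bounded_above_on (E : Type) (D : set E) (f : E -> R) : Prop :=
  exists M : R, forall x, D x -> f x <= M.

Definition affine_on (E F : lmodType R) (D : set E) (Phi : E -> F) : Prop :=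
  forall x y (l : R), D x -> D y -> 0 <= l <= 1 ->
    Phi (l *: x + (1 - l) *: y) = l *: Phi x + (1 - l) *: Phi y.

Definition inner_product (Y : lmodType R) (ip : Y -> Y -> R) : Prop :=
  [/\ (forall u v, ip u v = ip v u),
      (forall a u v w, ip (a *: u + v) w = a * ip u w + ip v w),
      (forall u, 0 <= ip u u) &
      (forall u, ip u u = 0 -> u = 0)].

Definition sqnorm (Y : lmodType R) (ip : Y -> Y -> R) (y : Y) : R := ip y y.

Definition global_min_on (E : Type) (D : set E) (f : E -> R) (x : E) : Prop :=
  D x /\ forall x', D x' -> f x <= f x'.
End Defs.

(* Main.v *)
Require Import Defs.
From mathcomp Require Import all_boot all_order all_algebra.
From mathcomp Require Import all_classical all_reals.
From mathcomp Require Import ereal.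
From mathcomp Require Import ring lra.
Import Order.TTheory GRing.Theory Num.Theory.
Local Open Scope classical_set_scope.
Local Open Scope ring_scope.

Lemma small_t (R : realType) (A D : R) :
  (forall t : R, 0 < t <= 1 -> 0 <= A + t * D) -> 0 <= A.
Proof.
move=> H; rewrite leNgt; apply/negP => A0.
case: (lerP D 0) => D0.
  have h1 : 0 < (1:R) <= 1 by apply/andP; split; lra.
  have := H 1 h1; lra.
have DA : 0 < D - A by lra.
have t0 : 0 < - A / (D - A) by apply: divr_gt0; lra.
have t1 : - A / (D - A) <= 1 by rewrite ler_pdivrMr //; lra.
have := H _ (introT andP (conj t0 t1)).
have -> : A + - A / (D - A) * D = - (A * A) / (D - A).
  by field; rewrite gt_eqF.
rewrite pmulr_lge0 ?invr_gt0 //; nra.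
Qed.
Lemma ip_lin (R : realType) (Y : lmodType R) (ip : Y -> Y -> R) :
  inner_product ip -> forall a b u v w,
  ip (a *: u + b *: v) w = a * ip u w + b * ip v w.
Proof.
case=> sym lin _ _ a b u v w.
have ip0 : ip 0 w = 0.
  have := lin 1 0 0 w; rewrite scale1r addr0 => h; lra.
rewrite lin; congr (_ + _).
by have := lin b v 0 w; rewrite addr0 ip0 addr0.
Qed.

Theorem theorem1p4 (R : realType) (E Y : lmodType R) (ip : Y -> Y -> R)
  (X : set E) (I : E -> R) (Phi : E -> Y) :
  inner_product ip ->
  convex_set X ->
  convex_fun_on X I ->
  bounded_above_on X I ->
  affine_on X Phi ->
  (forall y, (Phi @` X) y -> y <> 0 ->
     ereal_inf [set (ip z y)%:E | z in Phi @` X] = -oo%E) ->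
  [set x | global_min_on X (fun x => I x + sqnorm ip (Phi x)) x]
    `<=` Phi @^-1` [set 0].
Proof.
move=> hip cvX cvI [M hM] aff hinf x0 [X0 hmin] /=.
case: (eqVneq (Phi x0) 0) => // y0n; exfalso; set y0 := Phi x0 in y0n.
have hsym : forall u v, ip u v = ip v u by case: hip.
set Q0 := ip y0 y0.
have key : forall z, (Phi @` X) z ->
  (I x0 + 2 * Q0 - M) / 2 <= ip z y0.
  move=> z [x Xx <-].
  have H : forall t : R, 0 < t <= 1 ->
      0 <= (M - I x0 + 2 * ip (Phi x) y0 - 2 * Q0) +
           t * (ip (Phi x) (Phi x) - 2 * ip (Phi x) y0 + Q0).
    move=> t /andP[t0 t1].
    have t01 : 0 <= t <= 1 by apply/andP; split; lra.
    have Xt := cvX _ _ _ Xx X0 t01.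
    have := hmin _ Xt; rewrite /sqnorm aff //.
    have := cvI _ _ _ Xx X0 t01.
    have := hM _ Xx.
    rewrite (@ip_lin _ _ _ hip) (hsym (Phi x)) (hsym y0) !(@ip_lin _ _ _ hip).
    rewrite -/y0 -/Q0 (hsym y0 (t *: _ + _)) (@ip_lin _ _ _ hip) -/Q0 (hsym y0 (Phi x)).
    move=> h1 h2 h3.
    have h4 : 0 <= t * ((M - I x0 + 2 * ip (Phi x) y0 - 2 * Q0) +
           t * (ip (Phi x) (Phi x) - 2 * ip (Phi x) y0 + Q0)).
    have h5 : t * I x <= t * M by rewrite ler_wpM2l //; lra.
    nra.
    by rewrite pmulr_rge0 in h4.
  have := small_t _ _ _ H; lra.
have hy : (Phi @` X) y0 by exists x0.
have hy0 : y0 <> 0 by move=> e; move/eqP: y0n.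
have [w [z Zz <-]] := lb_ereal_infNy_adherent ((I x0 + 2 * Q0 - M) / 2 - 1) (hinf y0 hy hy0).
rewrite lte_fin => hz; have k := key _ Zz.
move: hz k; generalize (ip z y0) (I x0) Q0 M => a b c d.
lra.
Qed.
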